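(* Let $\lambda,\mu\in\mathbb{C}$ be nonzero. For each integer $L\geq 2$ with $N=L^2$ and each $J\in\mathbb{C}$, let $$V_{N,J}(q)=\sum_{i\in\Lambda_L}\Biggl[\frac{\lambda}{4!}q_i^4-\frac{\mu^2}{2}q_i^2+\frac{J}{4}\sum_{j\in\mathcal{N}(i)}(q_i-q_j)^2\Biggr],\qquad q\in\mathbb{C}^N,$$ and let $\mathcal{S}(N,\lambda,\mu^2)$ be the set of $J\in\mathbb{C}$ for which there exists $q\in\mathbb{C}^N$ with $\frac{\partial V_{N,J}}{\partial q_i}(q)=0$ for all $i$ and $\det\bigl(\frac{\partial^2 V_{N,J}(q)}{\partial q_i\partial q_j}\bigr)_{i,j}=0$. Then the set $$\mathcal{T}(\lambda,\mu^2)=\bigcup_{N\geq 2}\mathcal{S}(N,\lambda,\mu^2),$$ the union over all such lattice sizes $N=L^2\geq 2$, is a countable subset of $\mathbb{C}$.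
   Context: $\Lambda_L$ is the square lattice $(\mathbb{Z}/L\mathbb{Z})^2$ with periodic boundary conditions, whose $N=L^2$ sites are labelled $1,\dots,N$; $q_i$ is the variable at site $i$, and $\mathcal{N}(i)$ denotes the four nearest-neighbouring sites of $i$ (counted with multiplicity if they coincide). $V_{N,J}$ is the potential energy of the two-dimensional nearest-neighbour $\phi^4$ model with coupling $J$, extended to complex $q$ and $J$. *)

(* Defs.v *)
From HB Require Import structures.
From mathcomp Require Import all_boot all_order all_algebra.
From mathcomp Require Import reals.
From mathcomp Require Import complex.
From mathcomp Require Import mpoly.
Set Implicit Arguments. Unset Strict Implicit. Unset Printing Implicit Defensive.
Import Order.TTheory GRing.Theory Num.Theory.
Local Open Scope ring_scope.

Section Phi4.
Variable R : realType.
Local Notation C := (R[i]).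

(* The lattice Lambda_L = (Z/LZ)^2; site (x,y) is identified with the variable
   index mxvec_index x y : 'I_(L*L).  N = L*L. *)
Definition site (L : nat) (x y : 'I_L) : 'I_(L * L) := mxvec_index x y.

(* The four nearest neighbours of (x,y) on the periodic lattice, with
   multiplicity (ordS / ord_pred are cyclic successor / predecessor mod L). *)
Definition nbrs (L : nat) (x y : 'I_L) : seq 'I_(L * L) :=
  [:: site (ordS x) y; site (ord_pred x) y; site x (ordS y); site x (ord_pred y)].

Definition phi4_pot (L : nat) (lam mu J : C) : {mpoly C[L * L]} :=
  \sum_(x : 'I_L) \sum_(y : 'I_L)
    ( (lam / 4`!%:R) *: 'X_(site x y) ^+ 4
      - (mu ^+ 2 / 2%:R) *: 'X_(site x y) ^+ 2
      + (J / 4%:R) *: \sum_(j <- nbrs x y) ('X_(site x y) - 'X_j) ^+ 2 ).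

Definition S_set (L : nat) (lam mu : C) (J : C) : Prop :=
  exists q : 'I_(L * L) -> C,
    (forall i : 'I_(L * L), (mderiv i (phi4_pot L lam mu J)).@[q] = 0) /\
    \det (\matrix_(i, j) (mderiv j (mderiv i (phi4_pot L lam mu J))).@[q]) = 0.

(* T(lambda, mu^2) = union over lattice sizes N = L^2 >= 2, i.e. L >= 2. *)
Definition T_set (lam mu : C) (J : C) : Prop :=
  exists L : nat, (2 <= L)%N /\ S_set L lam mu J.

End Phi4.

Definition countable_set (T : Type) (A : T -> Prop) : Prop :=
  exists f : T -> nat, forall x y, A x -> A y -> f x = f y -> x = y.

(* Main.v *)
Require Import Defs.
From HB Require Import structures.
From mathcomp Require Import all_boot all_order all_algebra.
From mathcomp Require Import fingroup perm reals complex mpoly closed_field.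
From mathcomp Require Import ring lra.
From Stdlib Require Import Classical ClassicalEpsilon FunctionalExtensionality.
Import Order.TTheory GRing.Theory Num.Theory.
Local Open Scope ring_scope.
Local Open Scope complex_scope.
Set Implicit Arguments. Unset Strict Implicit. Unset Printing Implicit Defensive.
Section FC.
Variable F : closedFieldType.

Definition FC (P : F -> Prop) :=
  exists s : seq F, (forall x, P x -> x \in s) \/ (forall x, ~ P x -> x \in s).

Lemma rterm_poly (t : GRing.term F) : GRing.rterm t ->
  exists p : {poly F}, forall x, GRing.eval [:: x] t = p.[x].
Proof.
elim: t => /=.
- move=> [|n] _; [exists (polyX F) => x; rewrite hornerX // | exists 0 => x; rewrite horner0 /=].
  by case: n.
- by move=> c _; exists c%:P => x; rewrite hornerC.
- by move=> n _; exists (n%:R)%:P => x; rewrite hornerC.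
- move=> t1 IH1 t2 IH2 /andP[/IH1 [p1 H1] /IH2 [p2 H2]].
  by exists (p1 + p2) => x; rewrite hornerD H1 H2.
- by move=> t1 IH /IH [p H]; exists (- p) => x; rewrite hornerN H.
- by move=> t1 IH n /IH [p H]; exists (p *+ n) => x; rewrite hornerMn H.
- move=> t1 IH1 t2 IH2 /andP[/IH1 [p1 H1] /IH2 [p2 H2]].
  by exists (p1 * p2) => x; rewrite hornerM H1 H2.
- by [].
- by move=> t1 IH n /IH [p H]; exists (p ^+ n) => x; rewrite horner_exp H.
Qed.

Lemma FC_neg {P} : FC P -> FC (fun x => ~ P x).
Proof.
move=> [s [H|H]]; exists s; [right|left] => x Hx; apply: H => //.
by apply: Classical_Prop.NNPP.
Qed.

Lemma FC_or {P Q} : FC P -> FC Q -> FC (fun x => P x \/ Q x).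
Proof.
move=> [s [H|H]] [t [H'|H']].
- exists (s ++ t); left => x [/H|/H'] Hx; by rewrite mem_cat Hx ?orbT.
- by exists t; right => x Hx; apply: H' => Hq; apply: Hx; right.
- by exists s; right => x Hx; apply: H => Hq; apply: Hx; left.
- by exists s; right => x Hx; apply: H => Hq; apply: Hx; left.
Qed.

Lemma FC_ext {P} Q : (forall x, P x <-> Q x) -> FC P -> FC Q.
Proof.
move=> E [s [H|H]]; exists s; [left|right] => x Hx; apply: H.
  by apply/E.
by move=> /E.
Qed.

Lemma FC_qf (f : GRing.formula F) : GRing.qf_form f && GRing.rformula f ->
  FC (fun x => GRing.qf_eval [:: x] f).
Proof.
elim: f => /=.
- by move=> b _; exists [::]; case: b; [right|left].
- move=> t1 t2 /andP[/rterm_poly [p1 H1] /rterm_poly [p2 H2]].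
  have [/eqP E|nz] := eqVneq (p1 - p2) 0.
    exists [::]; right => x; rewrite H1 H2.
    by move: E; rewrite subr_eq0 => /eqP ->; rewrite eqxx.
  have [r Hr] := closed_field_poly_normal (p1 - p2).
  exists r; left => x; rewrite H1 H2 => /eqP E.
  have : root (p1 - p2) x by rewrite /root hornerD hornerN E subrr.
  rewrite Hr /root hornerZ mulf_eq0 lead_coef_eq0 (negPf nz) /=.
  by rewrite -/(root _ x) root_prod_XsubC.
- by [].
- move=> f1 IH1 f2 IH2 /andP[/andP[q1 q2] /andP[r1 r2]].
  have := FC_neg (FC_or (FC_neg (IH1 (introT andP (conj q1 r1)))) (FC_neg (IH2 (introT andP (conj q2 r2))))).
  apply: FC_ext => x; split.
    by move=> H; apply/andP; split; apply: Classical_Prop.NNPP => K; apply: H; [left|right].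
  by move=> /andP[-> ->] [].
- move=> f1 IH1 f2 IH2 /andP[/andP[q1 q2] /andP[r1 r2]].
  have := FC_or (IH1 (introT andP (conj q1 r1))) (IH2 (introT andP (conj q2 r2))).
  by apply: FC_ext => x; split; [case=> ->; rewrite ?orbT | case/orP; [left|right]].
- move=> f1 IH1 f2 IH2 /andP[/andP[q1 q2] /andP[r1 r2]].
  have := FC_or (FC_neg (IH1 (introT andP (conj q1 r1)))) (IH2 (introT andP (conj q2 r2))).
  apply: FC_ext => x; split.
    by case=> [/negP/negbTE -> | ->] //; rewrite implybT.
  by case: (GRing.qf_eval _ f1) => /= H; [right|left].
- move=> f1 IH1 H; have := FC_neg (IH1 H).
  by apply: FC_ext => x; split; [move/negP | move/negP].
- by [].
- by [].
Qed.
End FC.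
Arguments FC {F}.
Arguments FC_qf {F f}.
Arguments FC_ext {F P}.
Arguments FC_or {F P Q}.
Arguments FC_neg {F P}.
Lemma FC_holds (F : closedFieldType) (Phi : GRing.formula F) : GRing.rformula Phi ->
  FC (fun x => GRing.holds [:: x] Phi).
Proof.
move=> rP.
have wf := @ClosedFieldQE.wf_ex_elim F.
have ok := @ClosedFieldQE.holds_ex_elim F (fun n P h => @solve_monicpoly F n P h).
have := FC_qf (GRing.quantifier_elim_wf wf rP).
apply: FC_ext => x; split.
  by move/(GRing.quantifier_elim_rformP wf ok [:: x] rP).
by move/(GRing.quantifier_elim_rformP wf ok [:: x] rP).
Qed.
Section Enc.
Variable R : realType.
Local Notation C := (R[i]).
Variable L : nat.
Local Notation N := (L * L)%N.
Variables lam mu : C.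

Definition V0 : {mpoly C[N]} := \sum_(x : 'I_L) \sum_(y : 'I_L)
    ((lam / 4`!%:R) *: 'X_(site x y) ^+ 4 - (mu ^+ 2 / 2%:R) *: 'X_(site x y) ^+ 2).
Definition W : {mpoly C[N]} := \sum_(x : 'I_L) \sum_(y : 'I_L)
    (1 / 4%:R) *: \sum_(j <- nbrs x y) ('X_(site x y) - 'X_j) ^+ 2.

Lemma pot_split J : phi4_pot L lam mu J = V0 + J *: W.
Proof.
rewrite /phi4_pot /V0 /W scaler_sumr -big_split; apply: eq_bigr => x _.
rewrite scaler_sumr -big_split; apply: eq_bigr => y _.
by rewrite scalerA mul1r.
Qed.

Definition tmono (m : 'X_{1..N}) : GRing.term C :=
  \big[GRing.Mul/GRing.Const 1]_(k < N) GRing.Exp (GRing.Var _ k.+1) (m k).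
Definition tpoly (p : {mpoly C[N]}) : GRing.term C :=
  \big[GRing.Add/GRing.Const 0]_(m <- msupp p) GRing.Mul (GRing.Const p@_m) (tmono m).

Lemma eval_tpoly e p : GRing.eval e (tpoly p) = p.@[fun k => e`_k.+1].
Proof.
rewrite mevalE /tpoly (big_morph (GRing.eval e) (op2:=GRing.Add) (op1:=+%R) (id2:=GRing.Const 0) (id1 := 0)) //.
apply: eq_bigr => m _ /=; congr (_ * _).
by rewrite /tmono (big_morph (GRing.eval e) (op2:=GRing.Mul) (op1:=*%R) (id2:=GRing.Const 1) (id1 := 1)).
Qed.

Lemma rterm_tpoly p : GRing.rterm (tpoly p).
Proof.
apply: (big_ind (fun t => GRing.rterm t)) => //= [x y -> -> //|m _].
by apply: (big_ind (fun t => GRing.rterm t)) => //= x y -> ->.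
Qed.

Definition tJ : GRing.term C := GRing.Var _ 0.
Definition tgrad i := GRing.Add (tpoly (mderiv i V0)) (GRing.Mul tJ (tpoly (mderiv i W))).
Definition thess (i j : 'I_N) := GRing.Add (tpoly (mderiv j (mderiv i V0)))
   (GRing.Mul tJ (tpoly (mderiv j (mderiv i W)))).
Definition tdet := \big[GRing.Add/GRing.Const 0]_s
   GRing.Mul (GRing.Const ((-1) ^+ (s : {perm 'I_N}))) (\big[GRing.Mul/GRing.Const 1]_(i < N) thess i (s i)).
Definition Body : GRing.formula C :=
  GRing.And (foldr (fun i f => GRing.And (GRing.Equal (tgrad i) (GRing.Const 0)) f)
                  (GRing.Bool true) (enum 'I_N))
            (GRing.Equal tdet (GRing.Const 0)).
Definition Phi : GRing.formula C := foldr (fun k f => GRing.Exists k f) Body (iota 1 N).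

Lemma rterm_thess i j : GRing.rterm (thess i j).
Proof. by apply/andP; split; [exact: rterm_tpoly | apply/andP; split; [|exact: rterm_tpoly]]. Qed.

Lemma rterm_tgrad i : GRing.rterm (tgrad i).
Proof. by apply/andP; split; [exact: rterm_tpoly | apply/andP; split; [|exact: rterm_tpoly]]. Qed.

Lemma rterm_tdet : GRing.rterm tdet.
Proof.
rewrite /tdet; apply: (big_ind (fun t => GRing.rterm t)) => [//|x y hx hy|s _].
  exact/andP.
apply/andP; split => //.
apply: (big_ind (fun t => GRing.rterm t)) => [//|x y hx hy|i _].
  exact/andP.
exact: rterm_thess.
Qed.

Lemma rformula_Phi : GRing.rformula Phi.
Proof.
suff H : GRing.rformula Body by rewrite /Phi; elim: (iota 1 N).
rewrite /Body; apply/andP; split.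
  elim: (enum 'I_N) => [//|i r IH]; apply/andP; split => //.
  by apply/andP; split; [exact: rterm_tgrad|].
by apply/andP; split; [exact: rterm_tdet|].
Qed.

Lemma set_nth_size (e : seq C) x : set_nth 0 e (size e) x = e ++ [:: x].
Proof. by elim: e => //= a e ->. Qed.

Lemma holds_exists n k (e : seq C) f : size e = k ->
  (GRing.holds e (foldr (fun k f => GRing.Exists k f) f (iota k n)) <->
   exists s, size s = n /\ GRing.holds (e ++ s) f).
Proof.
elim: n k e => [|n IH] k e He /=; subst k.
  by split; [move=> H; exists [::]; rewrite cats0 | case=> s [/size0nil -> ]; rewrite cats0].
split.
  case=> x; rewrite set_nth_size => H.
  have := IH (size e).+1 (e ++ [:: x]); rewrite size_cat addn1 => /(_ erefl) [/(_ H) [s [Hs H']] _].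
  by exists (x :: s); rewrite -catA in H'; split; rewrite //= Hs.
case=> s [Hs H]; case: s Hs H => [|x s] //= [Hs] H; exists x; rewrite set_nth_size.
have := IH (size e).+1 (e ++ [:: x]); rewrite size_cat addn1 => /(_ erefl) [_]; apply.
by exists s; rewrite -catA.
Qed.

End Enc.
Section Enc2.
Variable R : realType.
Local Notation C := (R[i]).
Variable L : nat.
Local Notation N := (L * L)%N.
Variables lam mu : C.

Lemma holds_foldr (e : seq C) (G : 'I_N -> GRing.formula C) r :
  GRing.holds e (foldr (fun i f => GRing.And (G i) f) (GRing.Bool true) r) <->
  forall i, i \in r -> GRing.holds e (G i).
Proof.
elim: r => [|a r IH] /=; first by split.
split.
  by case=> Ha /IH H i; rewrite inE => /orP[/eqP ->|/H].
by move=> H; split; [apply: H; rewrite inE eqxx | apply/IH => i Hi; apply: H; rewrite inE Hi orbT].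
Qed.

Lemma grad_split J q i : (mderiv i (phi4_pot L lam mu J)).@[q] =
  (mderiv i (V0 L lam mu)).@[q] + J * (mderiv i (W R L)).@[q].
Proof. by rewrite pot_split mderivD mderivZ mevalD mevalZ. Qed.

Lemma hess_split J q i j : (mderiv j (mderiv i (phi4_pot L lam mu J))).@[q] =
  (mderiv j (mderiv i (V0 L lam mu))).@[q] + J * (mderiv j (mderiv i (W R L))).@[q].
Proof. by rewrite pot_split !mderivD !mderivZ mevalD mevalZ. Qed.

Lemma eval_thess J s i j : GRing.eval (J :: s) (thess lam mu i j) =
  (mderiv j (mderiv i (V0 L lam mu))).@[fun k => s`_k] + J * (mderiv j (mderiv i (W R L))).@[fun k => s`_k].
Proof. exact: (congr2 (fun a b => a + J * b) (eval_tpoly _ _) (eval_tpoly _ _)). Qed.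

Lemma holds_Phi J : GRing.holds [:: J] (Phi L lam mu) <-> S_set L lam mu J.
Proof.
rewrite /Phi (holds_exists _ _ _ (k := 1)) //.
split.
  case=> s [Hs [/holds_foldr Hg Hd]].
  exists (fun k : 'I_N => s`_k); split.
    move=> i; have := Hg i (mem_enum _ i); rewrite /= !eval_tpoly /= => H.
    by rewrite grad_split; exact: H.
  move: Hd; rewrite /= /tdet (big_morph (GRing.eval _) (op2:=GRing.Add) (op1:=+%R) (id2:=GRing.Const 0) (id1 := 0)) // => Hd.
  rewrite -[X in _ = X]Hd.
  rewrite /determinant; apply: eq_bigr => p _ /=; congr (_ * _).
  rewrite (big_morph (GRing.eval _) (op2:=GRing.Mul) (op1:=*%R) (id2:=GRing.Const 1) (id1 := 1)) //.
  by apply: eq_bigr => i _; rewrite mxE eval_thess; first [exact: (hess_split _ _ _ _) | exact: (esym (hess_split _ _ _ _))].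
case=> q [Hg Hd].
exists [seq q k | k <- enum 'I_N]; split; first by rewrite size_map size_enum_ord.
have Eq : (fun k : 'I_N => [seq q k | k <- enum 'I_N]`_k) = q.
  apply: functional_extensionality => k.
  by rewrite (nth_map k) ?size_enum_ord // nth_ord_enum.
split.
  apply/holds_foldr => i _ /=; rewrite !eval_tpoly /=.
  by rewrite Eq -grad_split Hg.
rewrite /= /tdet (big_morph (GRing.eval _) (op2:=GRing.Add) (op1:=+%R) (id2:=GRing.Const 0) (id1 := 0)) // -[X in _ = X]Hd.
rewrite /determinant; apply: eq_bigr => p _ /=; congr (_ * _).
rewrite (big_morph (GRing.eval _) (op2:=GRing.Mul) (op1:=*%R) (id2:=GRing.Const 1) (id1 := 1)) //.
by apply: eq_bigr => i _; rewrite mxE eval_thess Eq; first [exact: (hess_split _ _ _ _) | exact: (esym (hess_split _ _ _ _))].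
Qed.

Lemma FC_S : FC (S_set L lam mu).
Proof.
have := FC_holds (rformula_Phi L lam mu).
by apply: FC_ext => J; apply: holds_Phi.
Qed.
End Enc2.
Section Anal.
Variable R : realType.
Local Notation C := (R[i]).
Local Notation nrm := (@Normc.normc R).

Lemma nrm_ge0 (z : C) : 0 <= nrm z.
Proof. by case: z => a b; rewrite /Normc.normc sqrtr_ge0. Qed.

Lemma nrmM (x y : C) : nrm (x * y) = nrm x * nrm y.
Proof. exact: Normc.normcM. Qed.

Lemma nrmD (x y : C) : nrm (x + y) <= nrm x + nrm y.
Proof. exact: (le_normcD x y). Qed.

Lemma nrmN (x : C) : nrm (- x) = nrm x.
Proof. exact: (normcN x). Qed.

Lemma nrmB (x y : C) : nrm (x - y) <= nrm x + nrm y.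
Proof. by rewrite -(nrmN y); apply: nrmD. Qed.

Lemma nrm_real (x : R) : nrm (x%:C : C) = `|x|.
Proof. by rewrite /Normc.normc /= expr0n /= addr0 sqrtr_sqr. Qed.

Lemma nrm_nat n : nrm (n%:R : C) = n%:R.
Proof. by rewrite -(rmorph_nat (real_complex R)) nrm_real ger0_norm. Qed.

Lemma nrm_gt0 (z : C) : z != 0 -> 0 < nrm z.
Proof.
move=> nz; rewrite lt_def nrm_ge0 andbT; apply/eqP => /(@Normc.eq0_normc R) E.
by rewrite E eqxx in nz.
Qed.

Lemma nrm_sum (I : Type) (r : seq I) (P : pred I) (F : I -> C) :
  nrm (\sum_(i <- r | P i) F i) <= \sum_(i <- r | P i) nrm (F i).
Proof.
apply: (big_rec2 (fun a b => nrm b <= a)).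
  by rewrite (nrm_nat 0).
move=> i y1 y2 _ H; apply: le_trans (nrmD _ _) _; exact: lerD.
Qed.

Lemma nrm_b (T : eqType) (a b : T) : nrm ((a == b)%:R : C) <= 1.
Proof. by rewrite nrm_nat; case: (a == b). Qed.

Variable L : nat.
Local Notation N := (L * L)%N.

Lemma dX (i s : 'I_N) : mderiv i ('X_s : {mpoly C[N]}) = ((s == i)%:R)%:MP.
Proof.
rewrite mderivX mnm1E; case: (eqVneq s i) => [->|ne].
  have -> : (U_(i) - U_(i))%MM = 0%MM by apply/mnmP => k; rewrite mnmBE subnn mnm0E.
  by rewrite mpolyX0 scale1r mpolyC1.
by rewrite scale0r mpolyC0.
Qed.

End Anal.
Section Deriv.
Variable R : realType.
Local Notation C := (R[i]).
Variable L : nat.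
Local Notation N := (L * L)%N.
Local Notation b s i := (((s : 'I_N) == (i : 'I_N))%:R : C).

Lemma D1_site (c4 c2 : C) (s i : 'I_N) (q : 'I_N -> C) :
  (mderiv i (c4 *: 'X_s ^+ 4 - c2 *: 'X_s ^+ 2)).@[q] =
  b s i * (4%:R * c4 * q s ^+ 3 - 2%:R * c2 * q s).
Proof.
have -> : ('X_s : {mpoly C[N]}) ^+ 4 = 'X_s * ('X_s * ('X_s * 'X_s)) by rewrite !exprS expr0 mulr1.
have -> : ('X_s : {mpoly C[N]}) ^+ 2 = 'X_s * 'X_s by rewrite expr2.
rewrite !(mderivB, mderivZ, mderivM, dX).
rewrite !(mevalB, mevalZ, mevalD, mevalM, mevalC, mevalXU).
ring.
Qed.

Lemma D2_site (c4 c2 : C) (s i j : 'I_N) (q : 'I_N -> C) :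
  (mderiv j (mderiv i (c4 *: 'X_s ^+ 4 - c2 *: 'X_s ^+ 2))).@[q] =
  b s i * b s j * (12%:R * c4 * q s ^+ 2 - 2%:R * c2).
Proof.
have -> : ('X_s : {mpoly C[N]}) ^+ 4 = 'X_s * ('X_s * ('X_s * 'X_s)) by rewrite !exprS expr0 mulr1.
have -> : ('X_s : {mpoly C[N]}) ^+ 2 = 'X_s * 'X_s by rewrite expr2.
rewrite !(mderivB, mderivZ, mderivM, mderivD, dX, mderivC).
rewrite !(mevalB, mevalZ, mevalD, mevalM, mevalC, mevalXU, meval0).
ring.
Qed.

Lemma D1_edge (s t i : 'I_N) (q : 'I_N -> C) :
  (mderiv i (('X_s - 'X_t) ^+ 2)).@[q] = 2%:R * (q s - q t) * (b s i - b t i).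
Proof.
rewrite expr2 !(mderivB, mderivM, dX).
rewrite !(mevalB, mevalD, mevalM, mevalC, mevalXU).
ring.
Qed.

Lemma D2_edge (s t i j : 'I_N) (q : 'I_N -> C) :
  (mderiv j (mderiv i (('X_s - 'X_t) ^+ 2))).@[q] = 2%:R * (b s j - b t j) * (b s i - b t i).
Proof.
rewrite expr2 !(mderivB, mderivM, mderivD, dX, mderivC).
rewrite !(mevalB, mevalD, mevalM, mevalC, mevalXU, meval0).
ring.
Qed.
End Deriv.
Section V0W.
Variable R : realType.
Local Notation C := (R[i]).
Variable L : nat.
Local Notation N := (L * L)%N.
Variables lam mu : C.

Lemma sum_site (F : 'I_N -> C) :
  \sum_(x : 'I_L) \sum_(y : 'I_L) F (site x y) = \sum_k F k.
Proof.
rewrite pair_big /= [RHS](reindex (uncurry (@mxvec_index L L))) /=; last first.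
  by have [g H1 H2] := curry_mxvec_bij L L; exists g => // k _; apply: H2.
by apply: eq_bigr => -[x y] _.
Qed.

Lemma sum_delta (F : 'I_N -> C) i : \sum_k ((k == i)%:R * F k) = F i.
Proof.
rewrite (bigD1 i) //= eqxx mul1r big1 ?addr0 // => k /negbTE ->.
by rewrite mul0r.
Qed.

Lemma mderiv_sum (I : Type) (r : seq I) (P : pred I) (F : I -> {mpoly C[N]}) i :
  mderiv i (\sum_(x <- r | P x) F x) = \sum_(x <- r | P x) mderiv i (F x).
Proof. by apply: (big_morph (mderiv i)); [exact: mderivD | exact: mderiv0]. Qed.

Lemma meval_sum (I : Type) (r : seq I) (P : pred I) (F : I -> {mpoly C[N]}) q :
  (\sum_(x <- r | P x) F x).@[q] = \sum_(x <- r | P x) (F x).@[q].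
Proof. by apply: (big_morph (meval q)); [exact: mevalD | exact: meval0]. Qed.

Lemma D1_V0 i q : (mderiv i (V0 L lam mu)).@[q] = q i * (lam / 6%:R * q i ^+ 2 - mu ^+ 2).
Proof.
rewrite /V0 mderiv_sum meval_sum.
under eq_bigr do rewrite mderiv_sum meval_sum.
under eq_bigr do under eq_bigr do rewrite D1_site.
rewrite (sum_site (fun k => (k == i)%:R * (4%:R * (lam / (4`!)%:R) * q k ^+ 3 - 2%:R * (mu ^+ 2 / 2%:R) * q k))).
rewrite sum_delta (_ : 4`! = 24)%N //.
field.
all: by [].
Qed.

Lemma D2_V0 i j q : (mderiv j (mderiv i (V0 L lam mu))).@[q] =
  (i == j)%:R * (lam / 2%:R * q i ^+ 2 - mu ^+ 2).
Proof.
rewrite /V0 (mderiv_sum _ _ _ i) (mderiv_sum _ _ _ j) meval_sum.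
under eq_bigr do rewrite (mderiv_sum _ _ _ i) (mderiv_sum _ _ _ j) meval_sum.
under eq_bigr do under eq_bigr do rewrite D2_site.
rewrite (sum_site (fun k => (k == i)%:R * (k == j)%:R * (12%:R * (lam / (4`!)%:R) * q k ^+ 2 - 2%:R * (mu ^+ 2 / 2%:R)))).
under eq_bigr do rewrite -mulrA.
rewrite sum_delta (_ : 4`! = 24)%N //.
field.
all: by [].
Qed.
End V0W.
Section Wb.
Variable R : realType.
Local Notation C := (R[i]).
Local Notation nrm := (@Normc.normc R).
Variable L : nat.
Local Notation N := (L * L)%N.

Lemma nrm_bb (a b c d : 'I_N) : nrm (((a == b)%:R : C) - (c == d)%:R) <= 2%:R.
Proof.
apply: le_trans (nrmB _ _) _; have := nrm_b R a b; have := nrm_b R c d.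
move=> h1 h2; lra.
Qed.

Lemma four (x : R) : x + (x + (x + x)) = 4%:R * x.
Proof. by rewrite mulr_natl !mulrS mulr0n addr0. Qed.

Lemma nrm_quarter : nrm (1 / 4%:R : C) = 1 / 4%:R.
Proof. by rewrite nrmM Normc.normcV Normc.normc1 !nrm_nat. Qed.

Lemma edge1 (s t i : 'I_N) (q : 'I_N -> C) M : (forall k, nrm (q k) <= M) ->
  nrm ((mderiv i (('X_s - 'X_t) ^+ 2)).@[q]) <= 8%:R * M.
Proof.
move=> HM; rewrite D1_edge !nrmM nrm_nat.
have h1 : nrm (q s - q t) <= M + M by apply: le_trans (nrmB _ _) _; apply: lerD.
have h2 := nrm_bb s i t i.
have g1 := nrm_ge0 (q s - q t); have g2 := nrm_ge0 (((s == i)%:R : C) - (t == i)%:R).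
nra.
Qed.

Lemma edge2 (s t i j : 'I_N) (q : 'I_N -> C) :
  nrm ((mderiv j (mderiv i (('X_s - 'X_t) ^+ 2))).@[q]) <= 8%:R.
Proof.
rewrite D2_edge !nrmM nrm_nat.
have h1 := nrm_bb s j t j; have h2 := nrm_bb s i t i.
have g1 := nrm_ge0 (((s == j)%:R : C) - (t == j)%:R); have g2 := nrm_ge0 (((s == i)%:R : C) - (t == i)%:R).
nra.
Qed.

Lemma W1_bound i (q : 'I_N -> C) M : 0 <= M -> (forall k, nrm (q k) <= M) ->
  nrm ((mderiv i (W R L)).@[q]) <= 8%:R * (L * L)%:R * M.
Proof.
move=> M0 HM.
rewrite /W (mderiv_sum _ _ _ i) meval_sum.
apply: le_trans (nrm_sum _ _ _) _.
apply: (@le_trans _ _ (\sum_(x < L) \sum_(z < L) (8%:R * M))) _.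
  apply: ler_sum => x _; rewrite (mderiv_sum _ _ _ i) meval_sum.
  apply: le_trans (nrm_sum _ _ _) _; apply: ler_sum => y _.
  rewrite mderivZ mevalZ (mderiv_sum _ _ _ i) meval_sum nrmM nrm_quarter.
  apply: (@le_trans _ _ (1 / 4%:R * \sum_(j <- nbrs x y) (8%:R * M))) _.
    apply: ler_wpM2l; first by rewrite divr_ge0.
    apply: le_trans (nrm_sum _ _ _) _; apply: ler_sum => j _; exact: edge1.
  rewrite /nbrs !big_cons big_nil addr0.
  rewrite (_ : 8%:R * M + (8%:R * M + (8%:R * M + 8%:R * M)) = 4%:R * (8%:R * M) :> R); last exact: four.
  by rewrite mul1r mulKf ?pnatr_eq0.
by rewrite !sumr_const !card_ord -mulrnA -(mulr_natr (8%:R * M) (L * L)) mulrAC.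
Qed.
Lemma W2_bound i j (q : 'I_N -> C) :
  nrm ((mderiv j (mderiv i (W R L))).@[q]) <= 8%:R * (L * L)%:R.
Proof.
rewrite /W (mderiv_sum _ _ _ i) (mderiv_sum _ _ _ j) meval_sum.
apply: le_trans (nrm_sum _ _ _) _.
apply: (@le_trans _ _ (\sum_(x < L) \sum_(z < L) (8%:R : R))) _.
  apply: ler_sum => x _; rewrite (mderiv_sum _ _ _ i) (mderiv_sum _ _ _ j) meval_sum.
  apply: le_trans (nrm_sum _ _ _) _; apply: ler_sum => y _.
  rewrite !mderivZ mevalZ (mderiv_sum _ _ _ i) (mderiv_sum _ _ _ j) meval_sum nrmM nrm_quarter.
  apply: (@le_trans _ _ (1 / 4%:R * \sum_(k <- nbrs x y) (8%:R : R))) _.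
    apply: ler_wpM2l; first by rewrite divr_ge0.
    apply: le_trans (nrm_sum _ _ _) _; apply: ler_sum => k _; exact: edge2.
  rewrite /nbrs !big_cons big_nil addr0.
  rewrite (_ : 8%:R + (8%:R + (8%:R + 8%:R)) = 4%:R * 8%:R :> R); last exact: four.
  by rewrite mul1r mulKf ?pnatr_eq0.
by rewrite !sumr_const !card_ord -mulrnA -(mulr_natr (8%:R : R) (L * L)).
Qed.
End Wb.
Section Main.
Variable R : realType.
Local Notation C := (R[i]).
Local Notation nrm := (@Normc.normc R).

Lemma nrm_tri (x y : C) : nrm x <= nrm (x - y) + nrm y.
Proof. by rewrite -{1}(subrK y x); apply: nrmD. Qed.

Lemma nrm_sq (x : C) : nrm (x ^+ 2) = nrm x ^+ 2.
Proof. by rewrite !expr2 nrmM. Qed.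

Lemma nrm_divn (x : C) n : nrm (x / n%:R) = nrm x / n%:R.
Proof. by rewrite nrmM Normc.normcV nrm_nat. Qed.

Variable L : nat.
Local Notation N := (L * L)%N.
Variables lam mu : C.

Lemma small : (1 <= L)%N -> lam != 0 -> mu != 0 ->
  exists d : R, 0 < d /\ forall J : C, nrm J <= d -> ~ S_set L lam mu J.
Proof.
move=> L1 l0 m0.
have N0 : (0 < N)%N by rewrite muln_gt0 L1.
pose i0 : 'I_N := Ordinal N0.
pose a := nrm lam; pose m2 := nrm (mu ^+ 2).
have a0 : 0 < a by apply: nrm_gt0.
have m20 : 0 < m2 by apply: nrm_gt0; rewrite expf_neq0.
pose Nn : R := (L * L)%:R.
pose K : R := 8%:R * Nn.
have Nn1 : 1 <= Nn by rewrite /Nn ler1n.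
have K0 : 0 < K by rewrite /K; apply: mulr_gt0 => //; apply: lt_le_trans Nn1.
pose Bm : R := 1 + 6%:R * (m2 + K) / a.
have Bm1 : 1 <= Bm by rewrite /Bm lerDl divr_ge0 // ?mulr_ge0 // ?addr_ge0 // ltW.
pose eps : R := Order.min 1 (m2 / a).
have e0 : 0 < eps by rewrite lt_min ltr01 divr_gt0.
have e1 : eps <= 1 by rewrite ge_min lexx.
have e2 : a * eps <= m2.
  by rewrite mulrC -ler_pdivlMr //; rewrite ge_min lexx orbT.
pose D : R := 4%:R * K * Bm * (Nn + 1).
have Bm0 : 0 < Bm := lt_le_trans ltr01 Bm1.
have Nn0 : 0 <= Nn := le_trans ler01 Nn1.
have Nn10 : 0 < Nn + 1 by apply: lt_le_trans ltr01 _; rewrite lerDr.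
have D0 : 0 < D by rewrite /D !mulr_gt0 // ltr0n.
pose del : R := Order.min 1 (eps * m2 / D).
have d0 : 0 < del by rewrite lt_min ltr01 /= divr_gt0 // mulr_gt0.
have d1 : del <= 1 by rewrite ge_min lexx.
have d2 : del * D <= eps * m2.
  by rewrite -ler_pdivlMr //; rewrite ge_min lexx orbT.
have c2 : del * K * Bm * 4%:R <= eps * m2.
  apply: le_trans d2; rewrite /D.
  have : 0 <= del * K * Bm by rewrite !mulr_ge0 // ltW.
  nra.
have c3 : Nn * del * K * 4%:R <= m2.
  have em : eps * m2 <= m2 by rewrite ler_piMl // ltW.
  have dm : del * D <= m2 := le_trans d2 em.
  have h1 : Nn <= Bm * (Nn + 1) by nra.
  have h2 : 0 <= del * K * 4%:R by rewrite !mulr_ge0 // ltW.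
  have := ler_wpM2l h2 h1.
  rewrite /D in dm.
  have -> : Nn * del * K * 4%:R = del * K * 4%:R * Nn by ring.
  rewrite (_ : del * (4%:R * K * Bm * (Nn + 1)) = del * K * 4%:R * (Bm * (Nn + 1))) in dm; last by ring.
  move=> h3; exact: le_trans h3 dm.
exists del; split => // J HJ [q [Hg Hd]].
have HJ0 := nrm_ge0 J.
pose k0 := [arg max_(k > i0) nrm (q k)]%O.
have Hk0 : forall k, nrm (q k) <= nrm (q k0).
  by rewrite /k0; case: arg_maxP => //= k _ H k'; apply: H.
pose M := nrm (q k0).
have M0 : 0 <= M := nrm_ge0 _.
pose A i := (mderiv i (W R L)).@[q].
have HA : forall i, nrm (A i) <= K * M by move=> i; apply: W1_bound.
have grad : forall i, q i * (lam / 6%:R * q i ^+ 2 - mu ^+ 2) = - (J * A i).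
  move=> i; apply/eqP; rewrite -subr_eq0 opprK; apply/eqP.
  by have := Hg i; rewrite grad_split D1_V0.
have F1 : forall i, nrm (q i) * nrm (lam / 6%:R * q i ^+ 2 - mu ^+ 2) <= del * (K * M).
  move=> i; rewrite -nrmM grad nrmN nrmM; apply: ler_pM => //.
  by apply: nrm_ge0.
have low : forall i, a / 6%:R * nrm (q i) ^+ 2 <= nrm (lam / 6%:R * q i ^+ 2 - mu ^+ 2) + m2.
  move=> i; have := nrm_tri (lam / 6%:R * q i ^+ 2) (mu ^+ 2).
  by rewrite nrmM nrm_divn nrm_sq.
have MB : M <= Bm.
  have GM := F1 k0; have LM := low k0; rewrite -/M in GM LM.
  have G0 := nrm_ge0 (lam / 6%:R * q k0 ^+ 2 - mu ^+ 2).
  set G := nrm _ in GM LM G0.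
  have HM2 : M ^+ 2 * a <= 6%:R * (m2 + K).
    have [Mz|Mp] := eqVneq M 0.
      by rewrite Mz expr0n mul0r mulr_ge0 // addr_ge0 // ltW.
    have Mpos : 0 < M by rewrite lt_def Mp M0.
    have GK : G <= del * K.
      rewrite -(ler_pM2l Mpos); apply: le_trans GM _; lra.
    have : G <= K by apply: le_trans GK _; rewrite ler_piMl // ltW.
    move: LM; rewrite -[a / 6%:R]/(a * 6%:R^-1).
    have h6 : a * 6%:R^-1 * M ^+ 2 = (M ^+ 2 * a) / 6%:R by rewrite mulrC mulrA.
    rewrite h6 ler_pdivrMr //. lra.
  have : M ^+ 2 <= 6%:R * (m2 + K) / a by rewrite ler_pdivlMr.
  rewrite /Bm; nra.
have hp : forall i, m2 / 2%:R <= nrm (lam / 2%:R * q i ^+ 2 - mu ^+ 2).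
  move=> i; pose T := nrm (q i).
  have T0 : 0 <= T := nrm_ge0 _.
  have TM : T <= Bm := le_trans (Hk0 i) MB.
  have G0 := nrm_ge0 (lam / 6%:R * q i ^+ 2 - mu ^+ 2).
  have Fi := F1 i; rewrite -/T in Fi.
  set G := nrm (lam / 6%:R * q i ^+ 2 - mu ^+ 2) in Fi G0.
  have Fi' : T * G * 4%:R <= eps * m2.
    apply: le_trans c2; have : del * (K * M) <= del * K * Bm.
      by rewrite mulrA ler_wpM2l // mulr_ge0 // ltW.
    lra.
  have P1 : m2 <= a / 2%:R * T ^+ 2 + nrm (lam / 2%:R * q i ^+ 2 - mu ^+ 2).
    have := nrm_tri (mu ^+ 2) (lam / 2%:R * q i ^+ 2).
    rewrite -/m2 (_ : mu ^+ 2 - lam / 2%:R * q i ^+ 2 = - (lam / 2%:R * q i ^+ 2 - mu ^+ 2)).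
      by rewrite nrmN nrmM nrm_divn nrm_sq addrC.
    by rewrite opprB.
  have P2 : 2%:R * m2 <= nrm (lam / 2%:R * q i ^+ 2 - mu ^+ 2) + 3%:R * G.
    have := nrm_tri (2%:R * mu ^+ 2) (- (3%:R * (lam / 6%:R * q i ^+ 2 - mu ^+ 2))).
    rewrite nrmN (nrmM 2%:R) (nrmM 3%:R) !nrm_nat -/m2 -/G.
    rewrite (_ : 2%:R * mu ^+ 2 - - (3%:R * (lam / 6%:R * q i ^+ 2 - mu ^+ 2)) = lam / 2%:R * q i ^+ 2 - mu ^+ 2) //.
    field. all: try by rewrite ?pnatr_eq0.
  set H := nrm (lam / 2%:R * q i ^+ 2 - mu ^+ 2) in P1 P2 *.
  have [Te|Te] := leP T eps.
    have hT : T ^+ 2 <= eps by rewrite expr2; nra.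
    have : a * T ^+ 2 <= m2 by apply: le_trans e2; apply: ler_wpM2l => //; exact: ltW.
    move: P1; rewrite -[a / 2%:R]/(a * 2%:R^-1) => P1 h.
    have : a * 2%:R^-1 * T ^+ 2 = (a * T ^+ 2) / 2%:R by rewrite mulrAC.
    move=> E; rewrite E in P1; lra.
  have : G * 4%:R <= m2.
    have : T * (G * 4%:R) <= T * m2 by rewrite mulrA; apply: le_trans Fi' _; apply: ler_wpM2r; rewrite ?ltW.
    by rewrite ler_pM2l // (le_lt_trans _ Te) // ltW.
  lra.
move: Hd => /eqP/det0P [v vn0 Hv].
pose j0 := [arg max_(j > i0) nrm (v ord0 j)]%O.
have Hj0 : forall j, nrm (v ord0 j) <= nrm (v ord0 j0).
  by rewrite /j0; case: arg_maxP => //= j _ H j'; apply: H.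
pose V := nrm (v ord0 j0).
have V0 : 0 < V.
  have [j Hj] : exists j, v ord0 j != 0.
    apply/existsP; apply: contraR vn0 => /existsPn H.
    by apply/eqP/rowP => j; rewrite mxE; have := H j; rewrite negbK => /eqP.
  by apply: lt_le_trans (nrm_gt0 Hj) (Hj0 j).
have E := congr1 (fun m : 'rV[C]_N => m ord0 j0) Hv; move: E; rewrite /= !mxE.
under eq_bigr do rewrite mxE hess_split D2_V0.
pose B i := (mderiv j0 (mderiv i (W R L))).@[q].
have HB : forall i, nrm (B i) <= K by move=> i; apply: W2_bound.
move=> E.
have E2 : v ord0 j0 * (lam / 2%:R * q j0 ^+ 2 - mu ^+ 2) = - (J * \sum_i v ord0 i * B i).
  apply/eqP; rewrite -subr_eq0 opprK; apply/eqP; rewrite -[RHS]E.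
  rewrite big_distrr /= -[X in X + _ = _](sum_delta (fun i => v ord0 i * (lam / 2%:R * q i ^+ 2 - mu ^+ 2)) j0) -big_split /=.
  by apply: eq_bigr => i _; rewrite /B; ring.
have := congr1 nrm E2; rewrite nrmN !nrmM.
have SB : nrm (\sum_i v ord0 i * B i) <= Nn * (V * K).
  apply: le_trans (nrm_sum _ _ _) _.
  apply: (@le_trans _ _ (\sum_(i < N) V * K)).
    by apply: ler_sum => i _; rewrite nrmM; apply: ler_pM => //; apply: nrm_ge0.
  by rewrite sumr_const card_ord mulr_natl.
have := hp j0; rewrite -/V.
set H := nrm _ => h1 h2.
have h3 : V * (m2 / 2%:R) <= V * H by rewrite ler_pM2l.
have h4 := nrm_ge0 (\sum_i v ord0 i * B i).
set S := nrm (\sum_i _) in SB h2 h4.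
have : nrm J * S <= del * (Nn * (V * K)) by apply: ler_pM.
have : V * (Nn * del * K * 4%:R) <= V * m2 by rewrite ler_pM2l.
have : 0 < V * m2 by rewrite mulr_gt0.
lra.
Qed.
End Main.
Lemma pair_inj (a b c d : nat) : pickle ((a, b) : nat * nat) = pickle ((c, d) : nat * nat) -> a = c /\ b = d.
Proof. by move/(pcan_inj (@pickleK _)) => [-> ->]. Qed.

Section Final.
Variable R : realType.
Local Notation C := (R[i]).

Lemma normc_real (x : R) : Normc.normc (x%:C : C) = `|x|.
Proof. by rewrite /Normc.normc /= expr0n /= addr0 sqrtr_sqr. Qed.

Lemma finite_S L (lam mu : C) (d : R) : 0 < d ->
  (forall J : C, Normc.normc J <= d -> ~ S_set L lam mu J) ->
  exists s : seq C, forall J, S_set L lam mu J -> J \in s.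
Proof.
move=> d0 Hd; have [s [H|H]] := FC_S L lam mu; first by exists s.
exfalso.
pose g (n : nat) : C := (d / (n.+1)%:R)%:C.
have ginj : injective g.
  move=> m n /complexI /(mulfI (lt0r_neq0 d0)) /invr_inj /eqP.
  by rewrite eqr_nat => /eqP [].
have Hsub : {subset [seq g n | n <- iota 0 (size s).+1] <= s}.
  move=> x /mapP [n _ ->]; apply: H; apply: Hd.
  rewrite normc_real ger0_norm; last by rewrite divr_ge0 // ltW.
  by rewrite ler_pdivrMr // ler_peMr ?ler1n //; exact: ltW.
have U : uniq [seq g n | n <- iota 0 (size s).+1] by rewrite map_inj_uniq ?iota_uniq.
have := uniq_leq_size U Hsub.
by rewrite size_map size_iota ltnn.
Qed.

Theorem corollary1' (lam mu : C) :
  lam != 0 -> mu != 0 -> countable_set (T_set lam mu).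
Proof.
move=> l0 m0.
have H : forall L, exists s : seq C, (2 <= L)%N -> forall J, S_set L lam mu J -> J \in s.
  move=> L; case: (leqP 2 L) => hL; last by exists [::].
  have [d [d0 Hd]] := small (leq_trans (isT : (1 <= 2)%N) hL) l0 m0.
  by have [s Hs] := finite_S d0 Hd; exists s.
pose sf L := proj1_sig (constructive_indefinite_description _ (H L)).
have sfP L : (2 <= L)%N -> forall J, S_set L lam mu J -> J \in sf L.
  exact: (proj2_sig (constructive_indefinite_description _ (H L))).
pose eL J := epsilon (inhabits 0%N) (fun L => (2 <= L)%N /\ S_set L lam mu J).
exists (fun J => pickle ((eL J, index J (sf (eL J))) : nat * nat)) => x y Tx Ty E.
have [E1 E2] := pair_inj E.
have [h1 s1] := epsilon_spec (inhabits 0%N) (fun L => (2 <= L)%N /\ S_set L lam mu x) Tx.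
have [h2 s2] := epsilon_spec (inhabits 0%N) (fun L => (2 <= L)%N /\ S_set L lam mu y) Ty.
have i1 := sfP _ h1 _ s1; have i2 := sfP _ h2 _ s2.
rewrite -/(eL x) in i1; rewrite -/(eL y) in i2.
move: (eL x) (eL y) E1 i1 i2 E2 => Lx Ly <- i1 i2 E2.
by rewrite -(nth_index 0 i1) E2 nth_index.
Qed.
End Final.

Local Close Scope complex_scope.

Theorem corollary1 (R : realType) (lam mu : R[i]) :
  lam != 0 -> mu != 0 -> countable_set (T_set lam mu).
Proof. exact: corollary1'. Qed.
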